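(* If $\mathfrak{g}\in Q(\varphi)\setminus \downarrow{\mathfrak Z}$, then $\varnothing \neq P(\varphi_\mathfrak{g})\subseteq \Gamma_\mathfrak{g}\setminus \downarrow{\mathfrak Z}_\mathfrak{g}\subseteq Q(\varphi_\mathfrak{g})$, and ${\rm Eigen}(\sigma_{\varphi\restriction_{\frac{\mathfrak{g}}{\sim}},\mathfrak{w}^{\frac{\mathfrak{g}}{\sim}}},V^{\frac{\mathfrak{g}}{\sim}})\setminus\{0\}=\{r\in F\setminus\{0\}: \mathfrak{w}_\theta\cdots\mathfrak{w}_{\varphi^{per(\theta)-1}(\theta)}=r^{per(\theta)}\}$ for all $\theta\in P(\varphi_\mathfrak{g})$.
   Context: $V$ is a vector space over a field $F$, $\Gamma$ a nonempty set, $\varphi:\Gamma\to\Gamma$ a self-map, and $\mathfrak{w}=(\mathfrak{w}_\alpha)_{\alpha\in\Gamma}\in F^\Gamma$. The weighted generalized shift is $\sigma_{\varphi,\mathfrak{w}}:V^\Gamma\to V^\Gamma$, $(x_\alpha)_{\alpha\in\Gamma}\mapsto(\mathfrak{w}_\alpha x_{\varphi(\alpha)})_{\alpha\in\Gamma}$. For nonempty $D\subseteq\Gamma$, $\mathfrak{w}^D:=(\mathfrak{w}_\alpha)_{\alpha\in D}$. $\mathfrak{Z}:=\{\alpha\in\Gamma:\mathfrak{w}_\alpha=0\}$ and $\downarrow\mathfrak{Z}:=\bigcup_{n\geq0}\varphi^{-n}(\mathfrak{Z})$. The relation $\sim$ on $\Gamma$ is defined by $\alpha\sim\beta$ iff there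 exist $n,m\geq1$ with $\varphi^n(\alpha)=\varphi^m(\beta)$; it is an equivalence relation with classes $\frac{\alpha}{\sim}$. For $\mathfrak{g}\in\Gamma$: $\Gamma_\mathfrak{g}:=\frac{\mathfrak{g}}{\sim}$, $\varphi_\mathfrak{g}:=\varphi\restriction_{\Gamma_\mathfrak{g}}:\Gamma_\mathfrak{g}\to\Gamma_\mathfrak{g}$, $\downarrow\mathfrak{Z}_\mathfrak{g}:=\downarrow\mathfrak{Z}\cap\Gamma_\mathfrak{g}$. A point $a$ is wandering if $\{f^n(a)\}_{n\geq1}$ is one-to-one, quasi-periodic if $f^n(a)=f^m(a)$ for some $n>m\geq1$, periodic if $f^n(a)=a$ for some $n\geq1$; $W(f),Q(f),P(f)$ denote the sets of wandering, quasi-periodic, periodic points of a self-map $f$, and $per(\alpha)=\min\{n\geq1:f^n(\alpha)=\alpha\}$ for $\alpha\in P(f)$. For a linear map $T:W\to W$, ${\rm Eigen}(T,W)$ is the set of all $r\in F$ such that $T(x)=rx$ for some nonzero $x\in W$. *)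

(* Defs.v *)
From mathcomp Require Import all_boot all_algebra.
From mathcomp Require Import boolp.
Set Implicit Arguments. Unset Strict Implicit. Unset Printing Implicit Defensive.
Import GRing.Theory.
Local Open Scope ring_scope.

Section Dyn.
Variables (T : Type) (f : T -> T).

Definition wandering (a : T) : Prop :=
  forall n m : nat, (0 < n)%N -> (0 < m)%N -> iter n f a = iter m f a -> n = m.
Definition quasi_periodic (a : T) : Prop :=
  exists n m : nat, [/\ (0 < m)%N, (m < n)%N & iter n f a = iter m f a].
Definition periodic (a : T) : Prop :=
  exists n : nat, (0 < n)%N /\ iter n f a = a.

(* per(a) = min {n >= 1 : f^n(a) = a}  (0 by convention if a is not periodic) *)
Definition per (a : T) : nat :=
  match pselect (periodic a) with
  | left H =>
      @ex_minn (fun n => (0 < n)%N && `[< iter n f a = a >])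
        (let: ex_intro n (conj Hn Ha) := H in
         ex_intro _ n (introT andP (conj Hn (asboolT Ha))))
  | right _ => 0%N
  end.

Definition sim (a b : T) : Prop :=
  exists n m : nat, [/\ (0 < n)%N, (0 < m)%N & iter n f a = iter m f b].

Lemma sim_step (g a : T) : sim a g -> sim (f a) g.
Proof.
case=> n [m [n0 m0 E]]; exists n, m.+1; split => //.
by rewrite -iterSr iterS E -iterS.
Qed.

Definition sim_class (g : T) : Type := {a : T | sim a g}.

Definition restr_map (g : T) (a : sim_class g) : sim_class g :=
  exist _ (f (proj1_sig a)) (sim_step (proj2_sig a)).

End Dyn.

Section Shift.
Variables (F : fieldType) (V : lmodType F).

(* downZ phi w a  <->  a \in \downarrow Z = \bigcup_n phi^{-n}(Z), Z = {w = 0} *)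
Definition downZ (G : Type) (phi : G -> G) (w : G -> F) (a : G) : Prop :=
  exists n : nat, w (iter n phi a) = 0.

Definition wshift (G : Type) (phi : G -> G) (w : G -> F) (x : G -> V) : G -> V :=
  fun a => w a *: x (phi a).

Definition Eigen (G : Type) (T : (G -> V) -> (G -> V)) (r : F) : Prop :=
  exists x : G -> V, (exists a, x a != 0) /\ (forall a, T x a = r *: x a).

End Shift.

(* Main.v *)
Require Import Defs.
From mathcomp Require Import all_boot all_algebra boolp.
From mathcomp Require Import ring zify.
Set Implicit Arguments. Unset Strict Implicit. Unset Printing Implicit Defensive.
Import GRing.Theory.
Local Open Scope ring_scope.

Section Abs.
Variables (F : fieldType) (V : lmodType F) (S : Type) (f : S -> S) (ws : S -> F) (t : S).
Hypothesis tper : periodic f t.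

Lemma per_props : (0 < per f t)%N /\ iter (per f t) f t = t /\
  forall n, (0 < n)%N -> iter n f t = t -> (per f t <= n)%N.
Proof.
rewrite /per; case: pselect => // H.
case: ex_minnP => m /andP[m0 /asboolP Hm] mn; split => //; split => // n n0 Hn.
by apply: mn; rewrite n0; apply/asboolP.
Qed.

Definition Wf a n := \prod_(j < n) ws (iter j f a).

Lemma WfS a n : Wf a n.+1 = Wf a n * ws (iter n f a).
Proof. by rewrite /Wf big_ord_recr. Qed.

Lemma WfSl a n : Wf a n.+1 = ws a * Wf (f a) n.
Proof. rewrite /Wf big_ord_recl; congr (_ * _); apply: eq_bigr => j _. by rewrite /bump /= add0n -iterS iterSr. Qed.

Lemma Wf_add a n m : Wf a (n + m) = Wf a n * Wf (iter n f a) m.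
Proof.
elim: m => [|m IH]; first by rewrite addn0 /Wf big_ord0 mulr1.
by rewrite addnS !WfS IH -mulrA -iterD addnC.
Qed.

Hypothesis wnz : forall i, ws (iter i f t) != 0.

Lemma Wf_nz i : Wf t i != 0.
Proof.
elim: i => [|i IH]; first by rewrite /Wf big_ord0 oner_neq0.
by rewrite WfS mulf_neq0.
Qed.

Local Notation p := (per f t).

Lemma iter_mulp k : iter (k * p) f t = t.
Proof.
have [_ [Hp _]] := per_props.
by elim: k => [|k IH] //; rewrite mulSn iterD IH Hp.
Qed.

Lemma iter_modp c : iter c f t = iter (c %% p) f t.
Proof. by rewrite {1}(divn_eq c p) addnC iterD iter_mulp. Qed.

Lemma iter_inj c c' : (c < p)%N -> (c' < p)%N -> iter c f t = iter c' f t -> c = c'.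
Proof.
have [p0 [Hp mn]] := per_props.
wlog le: c c' / (c <= c')%N.
  move=> W hc hc' E; case: (leqP c c') => h; first exact: W.
  by symmetry; apply: W => //; apply: ltnW.
move=> hc hc' E; case: (ltngtP c c') => // lt; last by lia.
have : iter (p - c' + c) f t = t by rewrite iterD E -iterD subnK // ltnW.
move/(mn _ _); lia.
Qed.

Variable r : F.
Hypothesis r0 : r != 0.

Definition G c := r ^+ c / Wf t c.

Hypothesis prodr : Wf t p = r ^+ p.

Lemma G_addp c : G (p + c) = G c.
Proof.
have [_ [Hp _]] := per_props.
rewrite /G Wf_add Hp prodr exprD invfM mulrACA divff ?mul1r //.
exact: expf_neq0.
Qed.

Lemma G_mod c : G c = G (c %% p)%N.
Proof.
rewrite {1}(divn_eq c p); elim: (c %/ p)%N => [|k IH]; first by rewrite mul0n add0n.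
by rewrite mulSn -addnA G_addp.
Qed.

Lemma G_eq c c' : iter c f t = iter c' f t -> G c = G c'.
Proof.
have [p0 _] := per_props.
rewrite iter_modp (iter_modp c') => H.
by rewrite G_mod (G_mod c') (iter_inj _ _ H) // ltn_pmod.
Qed.

Variable v : V.
Definition E a N i := (Wf a N * G i / r ^+ N) *: v.

Lemma E_step a N i : iter N f a = iter i f t -> E a N i = E a N.+1 i.+1.
Proof.
move=> H; rewrite /E /G !WfS H; congr (_ *: v).
have := wnz i; have := Wf_nz i; move: (ws _) (Wf t i) => x y nx ny.
by rewrite !exprS; field; rewrite expf_neq0 ?r0 ?nx ?ny.
Qed.

Lemma E_inv a N i N' i' : iter N f a = iter i f t -> iter N' f a = iter i' f t ->
  E a N i = E a N' i'.
Proof.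
wlog le: N i N' i' / (N <= N')%N.
  move=> W H H'; case: (leqP N N') => h; first exact: W.
  by symmetry; apply: W => //; apply: ltnW.
move=> H H'; rewrite -(subnKC le); set K := (N' - N)%N.
have HK : forall k, iter (N + k) f a = iter (i + k) f t.
  by move=> k; rewrite addnC iterD H -iterD addnC.
have -> : E a N i = E a (N + K) (i + K).
  elim: K => [|k IH]; first by rewrite !addn0.
  by rewrite IH E_step // !addnS.
rewrite /E (@G_eq (i + K) i') // -HK subnKC //.
Qed.

End Abs.

Lemma eigen_char (F : fieldType) (V : lmodType F) (S : Type) (f : S -> S) (ws : S -> F) (t : S)
  (tper : periodic f t) (wnz : forall i, ws (iter i f t) != 0)
  (reach : forall a, exists N i, iter N f a = iter i f t)
  (vnz : exists v : V, v != 0) (r : F) :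
  (Eigen (wshift (V:=V) f ws) r /\ r != 0) <-> (r != 0 /\ Wf f ws t (per f t) = r ^+ per f t).
Proof.
split.
  move=> [[x [[a0 xa0] Hx]] r0]; split => //.
  have step a : x a != 0 -> x (f a) != 0.
    move=> h; apply/eqP => e; have := Hx a; rewrite /wshift e scaler0 => /esym/eqP.
    by rewrite scaler_eq0 (negbTE r0) (negbTE h).
  have stepn n a : x a != 0 -> x (iter n f a) != 0.
    by move=> h; elim: n => [|n IH] //; rewrite iterS step.
  case: (reach a0) => N [i Hi].
  have xi : x (iter i f t) != 0 by rewrite -Hi stepn.
  have [p0 [Hp _]] := per_props tper.
  have xt : x t != 0.
    have := stepn (i * (per f t - 1))%N _ xi; rewrite -iterD.
    by rewrite (_ : (i * (per f t - 1) + i = i * per f t)%N) ?iter_mulp //; by rewrite mulnBr muln1 subnK // leq_pmulr.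
  have pw k : r ^+ k *: x t = Wf f ws t k *: x (iter k f t).
    elim: k => [|k IH]; first by rewrite expr0 /Wf big_ord0 !scale1r.
    rewrite exprS -scalerA IH scalerA mulrC -scalerA -Hx /wshift WfS -scalerA iterS //.
  have := pw (per f t); rewrite Hp => /eqP; rewrite -subr_eq0 -scalerBl scaler_eq0 (negbTE xt) orbF subr_eq0.
  by move/eqP.
move=> [r0 pr]; split => //; case: vnz => v vn.
have reach' : forall a, exists Ni : nat * nat, iter Ni.1 f a = iter Ni.2 f t.
  by move=> a; case: (reach a) => N [i H]; exists (N, i).
pose ch a := proj1_sig (cid (reach' a)).
have chP a : iter (ch a).1 f a = iter (ch a).2 f t := proj2_sig (cid (reach' a)).
exists (fun a => E f ws t r v a (ch a).1 (ch a).2); split.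
  exists t; rewrite (@E_inv _ _ _ f ws t tper wnz r r0 pr v t _ _ 0 0 (chP t) erefl).
  by rewrite /E /G /Wf big_ord0 expr0 !divr1 !mulr1 scale1r.
move=> a; rewrite /wshift.
have h : iter (ch (f a)).1.+1 f a = iter (ch (f a)).2 f t by rewrite iterSr chP.
rewrite (@E_inv _ _ _ f ws t tper wnz r r0 pr v a _ _ _ _ (chP a) h) /E WfSl !scalerA.
by congr (_ *: v); rewrite exprS; field; rewrite expf_neq0.
Qed.

Lemma val_iter (Gamma : Type) (phi : Gamma -> Gamma) (g : Gamma) n (a : sim_class phi g) :
  proj1_sig (iter n (restr_map (g:=g)) a) = iter n phi (proj1_sig a).
Proof. by elim: n => [|n IH] //; rewrite !iterS /= IH. Qed.

Lemma sig_eq (Gamma : Type) (phi : Gamma -> Gamma) (g : Gamma) (a b : sim_class phi g) :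
  proj1_sig a = proj1_sig b -> a = b.
Proof. by case: a b => [x hx] [y hy] /= e; exact: eq_exist. Qed.

Theorem corollary2p8 (F : fieldType) (V : lmodType F) (Gamma : Type)
  (phi : Gamma -> Gamma) (w : Gamma -> F) (g : Gamma) :
  (exists v : V, v != 0) ->
  quasi_periodic phi g -> ~ downZ phi w g ->
  [/\ (exists t : sim_class phi g, periodic (restr_map (g:=g)) t),
      (forall a : sim_class phi g, periodic (restr_map (g:=g)) a ->
          ~ downZ phi w (proj1_sig a)),
      (forall a : sim_class phi g, ~ downZ phi w (proj1_sig a) ->
          quasi_periodic (restr_map (g:=g)) a) &
      (forall t : sim_class phi g, periodic (restr_map (g:=g)) t ->
        forall r : F,
          (Eigen (wshift (V:=V) (restr_map (g:=g))
                    (fun a : sim_class phi g => w (proj1_sig a))) r /\ r != 0)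
          <->
          (r != 0 /\
           \prod_(i < per (restr_map (g:=g)) t)
              w (proj1_sig (iter i (restr_map (g:=g)) t))
           = r ^+ per (restr_map (g:=g)) t))].
Proof.
move=> vnz [n0 [m0 [m0p lt E0]]] nd.
have cyc1 Y : (m0 <= Y)%N -> iter (n0 - m0 + Y) phi g = iter Y phi g.
  move=> hY; rewrite -(subnK hY) addnCA iterD subnK ?(ltnW lt) // E0 -iterD //.
have P2 : forall a : sim_class phi g, periodic (restr_map (g:=g)) a ->
    ~ downZ phi w (proj1_sig a).
  move=> a [q [q0 Hq]] [k Hk].
  have Hq' : iter q phi (proj1_sig a) = proj1_sig a by rewrite -val_iter Hq.
  have Hjq j : iter (j * q) phi (proj1_sig a) = proj1_sig a.
    by elim: j => [|j IH] //; rewrite mulSn iterD IH Hq'.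
  case: (proj2_sig a) => n [m [n0' m0' Ea]].
  apply: nd; exists (k + n * q - n + m)%N.
  rewrite iterD -Ea -iterD subnK; last by rewrite (leq_trans _ (leq_addl _ _)) // leq_pmulr.
  by rewrite iterD Hjq.
split => //.
- have st : sim phi (iter m0 phi g) g by exists 1%N, m0.+1; split.
  exists (exist (fun a => sim phi a g) _ st); exists (n0 - m0)%N; split; first by lia.
  by apply: sig_eq; rewrite val_iter /= -iterD cyc1.
- move=> a _; case: (proj2_sig a) => n [m [n0' m0' Ea]].
  exists (m0 + (n0 - m0) + n)%N, (m0 + n)%N; split; [lia|lia|].
  apply: sig_eq; rewrite !val_iter !iterD Ea -!iterD.
  by rewrite (addnC m0 (n0 - m0)%N) -addnA cyc1 // leq_addr.
- move=> t tp r; apply: eigen_char => //.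
    move=> i; apply/eqP => h; apply: (P2 t tp); exists i; by rewrite -val_iter.
  move=> a; case: (proj2_sig a) => n [m [_ _ Ea]]; case: (proj2_sig t) => n1 [m1 [_ _ Et]].
  exists (n + m1)%N, (n1 + m)%N; apply: sig_eq; rewrite !val_iter.
  by rewrite (addnC n) (addnC n1) !iterD Ea Et -!iterD addnC.
Qed.
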